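(* In any execution of $\mathtt{search}(\mathcal{G},T)$ (defined in the context), let $\mathcal{G}'$ be the current subgame with top priority $p$, $\alpha\equiv p\pmod 2$, and let $(Z,\sigma)=\mathit{TAttr}^{\mathcal{G}',T'}_\alpha(\mathrm{pr}^{-1}(p)\cap V')$ be the computed region and strategy. Then every play in $\mathcal{G}'$ that is consistent with $\sigma$ and stays in $Z$ forever is won by player $\alpha$.
   Context: Parity games: $\mathcal{G}=(V_0,V_1,E,\mathrm{pr})$, $V=V_0\cup V_1$ finite, partitioned into vertices of Even ($0$) and Odd ($1$); $E\subseteq V\times V$ with every vertex having a successor; $\mathrm{pr}:V\to\{0,\dots,d\}$. $E(u)=\{v:(u,v)\in E\}$, $\mathrm{pr}(U)=\max_{u\in U}\mathrm{pr}(u)$, $\mathrm{pr}^{-1}(p)$ the set of vertices of priority $p$, $\overline{\alpha}=1-\alpha$. A play (infinite path) is won by Even iff the highest priority occurring infinitely often is even; a cycle is won by $\alpha$ if its highest priority has parity $\alpha$. A strategy of $\alpha$ is a partial function $\sigma$ on $V_\alpha$ with $\sigma(v)\in E(v)$; a play is consistent with $\sigma$ if every vertex $v\in\mathrm{dom}(\sigma)$ on it is followed by $\sigma(v)$. For $U\subseteq V$, $\mathcal{G}\cap U$ is the subgame with vertices $V\cap U$ and edges $E\cap(U\times U)$, and $\mathcal{G}\setminus U=\mathcal{G}\cap(V\setminus U)$. A $p$-tangle is a nonempty $U\subseteq V$ with $p=\mathrm{pr}(U)$ such that for $\alpha\equiv p\pmod 2$ there is a strategy $\sigma:U\cap V_\alpha\to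 U$ (witness strategy $\sigma_T(U)$) with $(U,E\cap(\sigma\cup((U\cap V_{\overline{\alpha}})\times U)))$ strongly connected and all its cycles won by $\alpha$ (''won by $\alpha$''). For a tangle $t$ won by $\alpha$ in a game with edge set $E$, $E_T(t)=\{v\notin t:\exists u\in t\cap V_{\overline{\alpha}},(u,v)\in E\}$. $T_\alpha$ denotes the tangles of $T$ won by $\alpha$; for a subgame $\mathcal{G}'$, $T\cap\mathcal{G}'$ denotes the tangles of $T$ contained in its vertex set. Tangle attractor: for a game $\mathcal{G}$ with vertices $V$, tangles $T$, player $\alpha$ and $A\subseteq V$, $\mathit{TAttr}^{\mathcal{G},T}_\alpha(A)$ is the least $Z\supseteq A$ containing every $v\in V_\alpha$ with $E(v)\cap Z\neq\emptyset$, every $v\in V_{\overline{\alpha}}$ with $E(v)\subseteq Z$, and every vertex of every $t\in T_\alpha$ with $\emptyset\neq E_T(t)\subseteq Z$ ($E_T$ computed in $\mathcal{G}$). It is computed iteratively together with a strategy $\sigma$ of $\alpha$ (initially empty): when an $\alpha$-vertex is added individually, $\sigma$ maps it to a successor already in $Z$; each $\alpha$-vertex of $A$ gets as $\sigma$-value a successor in $Z$ once one exists; when the vertices of a tangle $t$ are added, $\sigma(u):=\sigma_T(t)(u)$ for every $\alpha$-vertex $u\in t$ not yet in $\mathrm{dom}(\sigma)$. extract-tangles$(Z,\sigma)$, for a subgame $\mathcal{G}'=(V',E')$ with top priority $p$, $\alpha\equiv p$, region $Z\subseteq V'$ and strategy $\sigma$: let $Y$ be the greatest $X\subseteq Z$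 such that every $v\in X\cap V_{\overline{\alpha}}$ has $E'(v)\subseteq X$ and every $v\in X\cap V_\alpha$ has $\sigma(v)\in X$; let $H$ be the graph on $Y$ with edges $(v,\sigma(v))$ for $v\in Y\cap V_\alpha$ and $(v,w)\in E'$ for $v\in Y\cap V_{\overline{\alpha}}$; return all bottom strongly connected components of $H$ that contain at least one edge of $H$, each with witness strategy $\sigma$ restricted to it. $\mathtt{search}(\mathcal{G},T)$ (with $T$ a set of tangles of $\mathcal{G}$): repeat forever: set $r:=\emptyset$ (a partial function $V\to\mathbb{N}$, the region function) and $Y:=\emptyset$; while $V\setminus\mathrm{dom}(r)\neq\emptyset$: let $\mathcal{G}':=\mathcal{G}\setminus\mathrm{dom}(r)$ with vertex set $V'$, $T':=T\cap\mathcal{G}'$, $p:=\mathrm{pr}(\mathcal{G}')$, $\alpha:=p\bmod 2$; compute $(Z,\sigma):=\mathit{TAttr}^{\mathcal{G}',T'}_\alpha(\mathrm{pr}^{-1}(p)\cap V')$ (the region of priority $p$); let $A:=$ extract-tangles$(Z,\sigma)$; if some $t\in A$ has $E_T(t)=\emptyset$ with $E_T$ computed in the full game $\mathcal{G}$, return $(T\cup Y,t)$; otherwise set $r(v):=p$ for all $v\in Z$ and $Y:=Y\cup A$. After the while-loop, set $T:=T\cup Y$. *)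

(* Defs.v *)
From Stdlib Require Import Relations.
From mathcomp Require Import all_boot.

Set Implicit Arguments.
Unset Strict Implicit.
Unset Printing Implicit Defensive.

(* Players are booleans: false = Even (player 0), true = Odd (player 1).
   A game on the finite vertex type V is given by
     own : V -> bool   (own v = true  iff  v is a vertex of Odd),
     E   : rel V       (edge relation),
     pr  : V -> nat    (priorities).
   A subgame is given by its vertex set S : {set V}, with edges E restricted
   to S x S. *)

(* A tangle as a datum: its vertex set and its witness strategy
   (a total function, only relevant on the vertices of the tangle's winner). *)
Record tangle (V : finType) := Tangle { tv : {set V}; tw : V -> V }.

Section ParityGames.
Variables (V : finType) (own : V -> bool) (E : rel V) (pr : V -> nat).

Definition maxpr (U : {set V}) : nat := \max_(v in U) pr v.

Definition top_region (S : {set V}) : {set V} := [set v in S | pr v == maxpr S].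

Definition inf_often (pl : nat -> V) (v : V) : Prop :=
  forall n, exists m, n <= m /\ pl m = v.

Definition won_by (alpha : bool) (pl : nat -> V) : Prop :=
  exists v, inf_often pl v /\ odd (pr v) = alpha /\
            (forall w, inf_often pl w -> pr w <= pr v).

Definition strat := V -> option V.
Definition empty_strat : strat := fun _ => None.
Definition upd (sigma : strat) (v w : V) : strat :=
  fun x => if x == v then Some w else sigma x.

Definition consistent (sigma : strat) (pl : nat -> V) : Prop :=
  forall i w, sigma (pl i) = Some w -> pl i.+1 = w.

Definition talpha (t : tangle V) : bool := odd (maxpr (tv t)).

Definition tgraph (t : tangle V) : rel V :=
  fun u w => [&& u \in tv t, w \in tv t &
              if own u == talpha t then w == tw t u else E u w].

(* t is a (pr(U))-tangle of the full game (V, E) with witness tw t;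
   cycles are closed walks (nonempty c with mathcomp's [cycle]) *)
Definition is_tangle (t : tangle V) : Prop :=
  [/\ tv t != set0,
      (forall u, u \in tv t -> own u = talpha t -> E u (tw t u) /\ tw t u \in tv t),
      (forall u w, u \in tv t -> w \in tv t -> connect (tgraph t) u w) &
      (forall c : seq V, c != [::] -> cycle (tgraph t) c ->
          odd (\max_(v <- c) pr v) = talpha t)].

Definition escapes (S : {set V}) (t : tangle V) : {set V} :=
  [set v in S | (v \notin tv t) &&
     [exists u in tv t, (own u != talpha t) && E u v]].

Definition sub_tangles (T : tangle V -> Prop) (S : {set V}) : tangle V -> Prop :=
  fun t => T t /\ tv t \subset S.

Definition eager (A : {set V}) (alpha : bool) (Z : {set V}) (sigma : strat) : Prop :=
  forall v, v \in A -> own v = alpha -> sigma v = None ->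
    forall w, w \in Z -> ~~ E v w.

Definition tangle_upd (sigma : strat) (t : tangle V) (alpha : bool) : strat :=
  fun u => if [&& u \in tv t, own u == alpha & sigma u == None]
           then Some (tw t u) else sigma u.

Inductive tattr_step (S : {set V}) (T : tangle V -> Prop) (alpha : bool)
    (A : {set V}) : {set V} * strat -> {set V} * strat -> Prop :=
| ta_alpha (Z : {set V}) (sigma : strat) (v w : V) :
    v \in S -> v \notin Z -> own v = alpha -> w \in Z -> E v w ->
    eager A alpha Z sigma ->
    tattr_step S T alpha A (Z, sigma) (v |: Z, upd sigma v w)
| ta_opp (Z : {set V}) (sigma : strat) (v : V) :
    v \in S -> v \notin Z -> own v = ~~ alpha ->
    (forall w, w \in S -> E v w -> w \in Z) ->
    eager A alpha Z sigma ->
    tattr_step S T alpha A (Z, sigma) (v |: Z, sigma)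
| ta_tangle (Z : {set V}) (sigma : strat) (t : tangle V) :
    T t -> talpha t = alpha ->
    escapes S t != set0 -> escapes S t \subset Z -> ~~ (tv t \subset Z) ->
    eager A alpha Z sigma ->
    tattr_step S T alpha A (Z, sigma) (Z :|: tv t, tangle_upd sigma t alpha)
| ta_init (Z : {set V}) (sigma : strat) (v w : V) :
    v \in A -> own v = alpha -> sigma v = None -> w \in Z -> E v w ->
    tattr_step S T alpha A (Z, sigma) (Z, upd sigma v w).

Definition tattr (S : {set V}) (T : tangle V -> Prop) (alpha : bool)
    (A : {set V}) (Z : {set V}) (sigma : strat) : Prop :=
  clos_refl_trans _ (tattr_step S T alpha A) (A, empty_strat) (Z, sigma) /\
  (forall st, ~ tattr_step S T alpha A (Z, sigma) st).

Definition sclosed (S : {set V}) (alpha : bool) (sigma : strat) (X : {set V}) : bool :=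
  [forall v in X,
     if own v == alpha then (if sigma v is Some w then w \in X else false)
     else [forall w in S, E v w ==> (w \in X)]].

Definition ext_core (S : {set V}) (alpha : bool) (Z : {set V}) (sigma : strat)
  : {set V} :=
  \bigcup_(X : {set V} | (X \subset Z) && sclosed S alpha sigma X) X.

Definition hgraph (S : {set V}) (alpha : bool) (Z : {set V}) (sigma : strat) : rel V :=
  fun u w => [&& u \in ext_core S alpha Z sigma, w \in ext_core S alpha Z sigma &
              if own u == alpha then sigma u == Some w else E u w].

Definition bscc_edge (h : rel V) (B : {set V}) : Prop :=
  [/\ B != set0,
      (forall u w, u \in B -> w \in B -> connect h u w),
      (forall u w, u \in B -> h u w -> w \in B) &
      (exists u w, [/\ u \in B, w \in B & h u w])].

Definition extracted (S : {set V}) (alpha : bool) (Z : {set V}) (sigma : strat)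
    (t : tangle V) : Prop :=
  exists B : {set V}, [/\ B \subset ext_core S alpha Z sigma,
                bscc_edge (hgraph S alpha Z sigma) B &
                t = Tangle B (fun u => odflt u (sigma u))].

(* state: (T, dom r, Y) *)
Definition sstate := ((tangle V -> Prop) * {set V} * (tangle V -> Prop))%type.

Inductive search_step : sstate -> sstate -> Prop :=
| ss_inner (T : tangle V -> Prop) (D : {set V}) (Y : tangle V -> Prop) (Z : {set V}) (sigma : strat) :
    ~: D != set0 ->
    tattr (~: D) (sub_tangles T (~: D)) (odd (maxpr (~: D)))
          (top_region (~: D)) Z sigma ->
    (* no extracted tangle is closed in the full game (else search returns) *)
    (forall t, extracted (~: D) (odd (maxpr (~: D))) Z sigma t ->
               escapes setT t != set0) ->
    search_step (T, D, Y)
      (T, D :|: Z, fun t => Y t \/ extracted (~: D) (odd (maxpr (~: D))) Z sigma t)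
| ss_outer (T : tangle V -> Prop) (D : {set V}) (Y : tangle V -> Prop) :
    D = setT ->
    search_step (T, D, Y) (fun t => T t \/ Y t, set0, fun _ => False).

Definition search_reachable (T0 : tangle V -> Prop) (st : sstate) : Prop :=
  clos_refl_trans _ search_step (T0, set0, fun _ => False) st.

End ParityGames.

(* Main.v *)
Require Import Defs.
From Stdlib Require Import Relations Classical.
From mathcomp Require Import all_boot.
Set Implicit Arguments. Unset Strict Implicit. Unset Printing Implicit Defensive.

Section Gen.
Variable V : finType.

Lemma cycle_nth (e : rel V) (c : seq V) x0 : cycle e c ->
  forall i, i < size c -> e (nth x0 c i) (nth x0 c (i.+1 %% size c)).
Proof.
case: c => [//|x s] /= Hc i Hi.
move/pathP: Hc => /(_ x0 i); rewrite size_rcons => /(_ Hi).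
rewrite -rcons_cons nth_rcons /= Hi nth_rcons.
case: (ltnP i (size s)) => His.
  by rewrite modn_small.
have -> : i = size s by apply/eqP; rewrite eqn_leq His -ltnS Hi.
by rewrite eqxx modnn.
Qed.

Lemma path_iota (e : rel V) (f : nat -> V) j n :
  (forall i, j <= i -> e (f i) (f i.+1)) -> path e (f j) [seq f i | i <- iota j.+1 n].
Proof.
elim: n j => [//|n IH] j H /=.
rewrite H //=; apply: IH => i Hi; apply: H; exact: ltnW.
Qed.

Lemma cycle_iota (e : rel V) (f : nat -> V) m k :
  (forall i, m <= i -> e (f i) (f i.+1)) -> f (m + k.+1) = f m ->
  cycle e [seq f i | i <- iota m k.+1].
Proof.
move=> H Hf /=.
have -> : rcons [seq f i | i <- iota m.+1 k] (f m) = [seq f i | i <- iota m.+1 k.+1].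
  by rewrite -[k.+1]addn1 iotaD map_cat cats1 /= addSnnS Hf.
exact: (@path_iota e f m k.+1 H).
Qed.

Lemma ev_inf (pl : nat -> V) : exists N, forall m, N <= m -> inf_often pl (pl m).
Proof.
suff: forall s : seq V, exists N, forall m, N <= m -> pl m \in s -> inf_often pl (pl m).
  by case/(_ (enum V)) => N HN; exists N => m Hm; apply: HN; rewrite ?mem_enum.
elim=> [|a s [N IH]]; first by exists 0.
case: (classic (inf_often pl a)) => Ha.
  exists N => m Hm; rewrite in_cons; case/orP => [/eqP -> //|]; exact: IH.
have [n Hn] : exists n, forall m, n <= m -> pl m <> a.
  apply: NNPP => Hne; apply: Ha => n; apply: NNPP => Hn; apply: Hne; exists n.
  by move=> m Hm Hpl; apply: Hn; exists m.
exists (maxn N n) => m; rewrite geq_max => /andP [H1 H2]; rewrite in_cons.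
case/orP => [/eqP Hm|]; first by exfalso; exact: (Hn m H2 Hm).
exact: IH.
Qed.

Lemma ex_max (pr : V -> nat) (P : V -> Prop) x0 : P x0 ->
  exists v, P v /\ forall w, P w -> pr w <= pr v.
Proof.
suff: forall s : seq V, (exists x, x \in s /\ P x) ->
   exists v, P v /\ forall w, w \in s -> P w -> pr w <= pr v.
  move=> H Hx0; case: (H (enum V)); first by exists x0; rewrite mem_enum.
  by move=> v [Pv Hv]; exists v; split => // w Pw; apply: Hv; rewrite ?mem_enum.
elim=> [|a s IH]; first by case=> x [].
move=> Hex; case: (classic (exists x, x \in s /\ P x)) => Hs.
  case: (IH Hs) => v [Pv Hv].
  case: (classic (P a)) => Pa.
    case: (leqP (pr a) (pr v)) => Hav.
      exists v; split => // w; rewrite in_cons => /orP [/eqP ->//|]; exact: Hv.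
    exists a; split => // w; rewrite in_cons => /orP [/eqP ->//|] ws Pw.
    by apply: leq_trans (Hv _ ws Pw) (ltnW Hav).
  exists v; split => // w; rewrite in_cons => /orP [/eqP ->//|]; exact: Hv.
case: (classic (P a)) => Pa.
  exists a; split => // w; rewrite in_cons => /orP [/eqP ->//|] ws Pw.
  by exfalso; apply: Hs; exists w.
exfalso; case: Hex => x []; rewrite in_cons => /orP [/eqP -> //|xs Px].
by apply: Hs; exists x.
Qed.

End Gen.

Section Core.
Variables (V : finType) (own : V -> bool) (E : rel V) (pr : V -> nat).
Variables (S : {set V}) (TT : tangle V -> Prop) (alpha : bool) (A : {set V}).
Hypothesis HTT : forall t, TT t -> is_tangle own E pr t /\ tv t \subset S.
Hypothesis HAS : A \subset S.

Definition Inv (st : {set V} * strat V) : Prop :=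
  let (Z, sigma) := st in
  [/\ A \subset Z, Z \subset S,
      (forall u w, sigma u = Some w -> [/\ u \in Z, own u = alpha & E u w]) &
      exists (rk : V -> nat) (tg : nat -> tangle V) (n : nat),
        (forall u, u \in Z -> rk u < n) /\
        (forall v w, v \in Z -> v \notin A -> w \in S -> E v w ->
           (forall x, sigma v = Some x -> w = x) ->
           w \in Z /\ (rk w < rk v \/ [/\ rk w = rk v, TT (tg (rk v)),
                talpha pr (tg (rk v)) = alpha & tgraph own E pr (tg (rk v)) v w]))].

Lemma Inv_init : Inv (A, @empty_strat V).
Proof.
split => //; exists (fun _ => 0), (fun _ => Tangle set0 id), 1; split => //.
by move=> v w ->.
Qed.

Lemma Inv_step st st' : tattr_step own E pr S TT alpha A st st' -> Inv st -> Inv st'.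
Proof.
case=> {st st'}.
-
  move=> Z sigma v w vS vZ ov wZ Evw _ [HA HZS Hsig [rk [tg [n [Hn Hr]]]]].
  have vw : w != v by apply: contraNneq vZ => <-.
  split.
  + by apply: subset_trans HA (subsetU1 _ _).
  + by rewrite subUset sub1set vS HZS.
  + move=> u x; rewrite /upd; case: eqP => [-> [<-]|_ /Hsig [? ? ?]].
      by rewrite setU11.
    by split => //; rewrite setU1r.
  exists (fun u => if u == v then n else rk u), tg, n.+1; split.
    move=> u; case: eqP => // uv; rewrite in_setU1 => /orP [/eqP/uv [] | /Hn /ltnW //].
  move=> v0 w0; rewrite in_setU1 => /orP [/eqP ->|v0Z] v0A w0S E0 Hc.
    have := Hc w; rewrite /upd eqxx => /(_ erefl) ->.
    by rewrite setU1r // (negbTE vw); split => //; left; apply: Hn.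
  have v0v : v0 != v by apply: contraNneq vZ => <-.
  have Hc' : forall x, sigma v0 = Some x -> w0 = x.
    by move=> x Hx; apply: Hc; rewrite /upd (negbTE v0v).
  have [w0Z Hd] := Hr v0 w0 v0Z v0A w0S E0 Hc'.
  have w0v : w0 != v by apply: contraNneq vZ => <-.
  by rewrite setU1r // (negbTE v0v) (negbTE w0v).
-
  move=> Z sigma v vS vZ ov Hsucc _ [HA HZS Hsig [rk [tg [n [Hn Hr]]]]].
  split.
  + by apply: subset_trans HA (subsetU1 _ _).
  + by rewrite subUset sub1set vS HZS.
  + by move=> u x /Hsig [? ? ?]; split => //; rewrite setU1r.
  exists (fun u => if u == v then n else rk u), tg, n.+1; split.
    move=> u; case: eqP => // uv; rewrite in_setU1 => /orP [/eqP/uv [] | /Hn /ltnW //].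
  move=> v0 w0; rewrite in_setU1 => /orP [/eqP ->|v0Z] v0A w0S E0 Hc.
    have w0Z := Hsucc w0 w0S E0.
    have w0v : w0 != v by apply: contraNneq vZ => <-.
    by rewrite setU1r // eqxx (negbTE w0v); split => //; left; apply: Hn.
  have v0v : v0 != v by apply: contraNneq vZ => <-.
  have [w0Z Hd] := Hr v0 w0 v0Z v0A w0S E0 Hc.
  have w0v : w0 != v by apply: contraNneq vZ => <-.
  by rewrite setU1r // (negbTE v0v) (negbTE w0v).
-
  move=> Z sigma t Tt at_ _ escZ _ _ [HA HZS Hsig [rk [tg [n [Hn Hr]]]]].
  have [[_ Htw _ _] tS] := HTT Tt.
  split.
  + by apply: subset_trans HA (subsetUl _ _).
  + by rewrite subUset HZS tS.
  + move=> u x; rewrite /tangle_upd.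
    case: ifP => [/and3P [ut /eqP ou /eqP su] [<-]|_ /Hsig [? ? ?]].
      have [E1 _] := Htw u ut (etrans ou (esym at_)).
      by rewrite in_setU ut orbT.
    by split => //; rewrite in_setU; apply/orP; left.
  exists (fun u => if (u \in tv t) && (u \notin Z) then n else rk u),
         (fun k => if k == n then t else tg k), n.+1; split.
    move=> u; case: ifP => // /negbT; rewrite negb_and negbK in_setU.
    move=> H1 /orP [/Hn /ltnW //|ut]; by move: H1; rewrite ut /= => /Hn /ltnW.
  move=> v0 w0 v0Z'.
  case: (boolP (v0 \in Z)) => v0Z.
    move=> v0A w0S E0 Hc.
    have Hc' : forall x, sigma v0 = Some x -> w0 = x.
      move=> x Hx; apply: Hc; rewrite /tangle_upd Hx.
      by case: ifP => // /and3P [_ _ /eqP].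
    have [w0Z Hd] := Hr v0 w0 v0Z v0A w0S E0 Hc'.
    rewrite in_setU w0Z /= !andbF (ltn_eqF (Hn _ v0Z)).
    by split.
  have v0t : v0 \in tv t by move: v0Z'; rewrite in_setU (negbTE v0Z).
  have sv0 : sigma v0 = None.
    by case E1: (sigma v0) => [x|//]; case: (Hsig _ _ E1) => H; rewrite H in v0Z.
  move=> v0A w0S E0 Hc; rewrite v0t /= eqxx.
  have Hesc : w0 \in tv t \/ w0 \in Z.
    case: (boolP (w0 \in tv t)) => w0t; [by left|right].
    case: (boolP (own v0 == alpha)) => [/eqP ov0|ov0].
      have := Hc (tw t v0); rewrite /tangle_upd v0t ov0 eqxx sv0 /= => /(_ erefl) Hw.
      by have [_] := Htw v0 v0t (etrans ov0 (esym at_)); rewrite -Hw (negbTE w0t).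
    apply: (subsetP escZ); rewrite inE w0S w0t /=; apply/existsP; exists v0.
    by rewrite v0t at_ ov0 E0.
  case: (boolP (w0 \in Z)) => w0Z.
    by rewrite in_setU w0Z /= andbF; split => //; left; apply: Hn.
  have w0t : w0 \in tv t by case: Hesc => // H; rewrite H in w0Z.
  rewrite in_setU w0t orbT /=; split => //; right; split => //.
  rewrite /tgraph v0t w0t /= at_.
  case: (boolP (own v0 == alpha)) => [/eqP ov0|//].
  have := Hc (tw t v0); rewrite /tangle_upd v0t ov0 eqxx sv0 /= => /(_ erefl) ->.
  by rewrite eqxx.
-
  move=> Z sigma v w vA ov sv wZ Evw [HA HZS Hsig [rk [tg [n [Hn Hr]]]]].
  split => //.
  + move=> u x; rewrite /upd; case: eqP => [-> [<-]|_ /Hsig //].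
    by split => //; apply: (subsetP HA).
  exists rk, tg, n; split => // v0 w0 v0Z v0A w0S E0 Hc.
  have v0v : v0 != v by apply: contraNneq v0A => ->.
  by apply: Hr => // x Hx; apply: Hc; rewrite /upd (negbTE v0v).
Qed.

Hypothesis HApr : forall a, a \in A -> odd (pr a) = alpha /\ forall w, w \in S -> pr w <= pr a.

Lemma play_won Z sigma pl : Inv (Z, sigma) ->
  (forall i, pl i \in Z /\ E (pl i) (pl i.+1)) -> consistent sigma pl ->
  won_by pr alpha pl.
Proof.
move=> [HA HZS Hsig [rk [tg [n [Hn Hr]]]]] Hplay Hcons.
have [N0 HN0] := ev_inf pl.
case: (classic (exists m, N0 <= m /\ pl m \in A)) => [[m [Hm Ham]]|HnA].
  have [Ho Hmax] := HApr Ham.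
  exists (pl m); split; first exact: HN0.
  split => // w /(_ 0) [k [_ <-]]; apply: Hmax; apply: (subsetP HZS); exact: (Hplay k).1.
have HnA' : forall m, N0 <= m -> pl m \notin A.
  by move=> m Hm; apply/negP => H; apply: HnA; exists m.
have Hstep : forall m, N0 <= m -> rk (pl m.+1) < rk (pl m) \/
   [/\ rk (pl m.+1) = rk (pl m), TT (tg (rk (pl m))), talpha pr (tg (rk (pl m))) = alpha
     & tgraph own E pr (tg (rk (pl m))) (pl m) (pl m.+1)].
  move=> m Hm; have [Z1 E1] := Hplay m; have [Z2 _] := Hplay m.+1.
  by have [_ H] := Hr _ _ Z1 (HnA' m Hm) (subsetP HZS _ Z2) E1 (fun x Hx => Hcons m x Hx).
have Hmono : forall m d, N0 <= m -> rk (pl (m + d)) <= rk (pl m).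
  move=> m d Hm; elim: d => [|d IH]; first by rewrite addn0.
  rewrite addnS; apply: leq_trans IH.
  by case: (Hstep (m + d) (leq_trans Hm (leq_addr _ _))) => [/ltnW|[-> _ _ _]].
have Hstab : forall k m, N0 <= m -> rk (pl m) <= k ->
    exists m1, N0 <= m1 /\ forall m', m1 <= m' -> rk (pl m') = rk (pl m1).
  elim=> [|k IH] m Hm Hk;
  (case: (classic (forall m', m <= m' -> rk (pl m') = rk (pl m))) => Hall; first by exists m);
  (have [m' [Hm' Hne]] : exists m', m <= m' /\ rk (pl m') <> rk (pl m) by
    apply: NNPP => H; apply: Hall => m' Hm'; apply: NNPP => H'; apply: H; exists m');
  (have Hlt : rk (pl m') < rk (pl m) by
    rewrite ltn_neqAle; apply/andP; split; [apply/eqP | rewrite -(subnKC Hm') Hmono]).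
  - by move: (leq_trans Hlt Hk).
  - apply: (IH m'); [exact: leq_trans Hm Hm' | by rewrite -ltnS; apply: leq_trans Hlt Hk].
have [m1 [Hm1 Hc1]] := Hstab _ N0 (leqnn _) (leqnn _).
set k := rk (pl m1); set t := tg k.
have Ht : forall m, m1 <= m -> [/\ TT t, talpha pr t = alpha & tgraph own E pr t (pl m) (pl m.+1)].
  move=> m Hm; have e1 := Hc1 m Hm; have e2 := Hc1 m.+1 (leq_trans Hm (leqnSn _)).
  case: (Hstep m (leq_trans Hm1 Hm)) => [|[_ H1 H2 H3]]; first by rewrite e1 e2 ltnn.
  by rewrite e1 in H1 H2 H3.
have [Tt Hta _] := Ht m1 (leqnn _).
have [[_ _ _ Hcyc] _] := HTT Tt.
have [v [Hv Hvmax]] := @ex_max V pr (inf_often pl) (pl m1) (HN0 m1 Hm1).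
have [m2 [Hm2 Hv2]] := Hv m1.
have [m3 [Hm3 Hv3]] := Hv m2.+1.
set kk := (m3 - m2).-1.
have Hkk : m3 - m2 = kk.+1 by rewrite /kk prednK // subn_gt0.
set c := [seq pl i | i <- iota m2 (m3 - m2)].
have Hcy : cycle (tgraph own E pr t) c.
  rewrite /c Hkk; apply: cycle_iota.
    by move=> i Hi; have [_ _ H] := Ht i (leq_trans Hm2 Hi).
  by rewrite -Hkk subnKC ?Hv2 ?Hv3 //; apply: ltnW.
have Hc0 : c != [::] by rewrite /c Hkk.
have := Hcyc c Hc0 Hcy.
have -> : \max_(x <- c) pr x = pr v.
  apply/eqP; rewrite eqn_leq; apply/andP; split.
    apply/bigmax_leqP_seq => x /mapP [i]; rewrite mem_iota => /andP [Hi _] -> _.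
    by apply: Hvmax; apply: HN0; apply: leq_trans Hm1 (leq_trans Hm2 Hi).
  apply: leq_bigmax_seq => //; rewrite -Hv2; apply: map_f.
  by rewrite mem_iota leqnn /= Hkk addnS ltnS leq_addr.
rewrite Hta => Ho; exists v; split => //.
Qed.

Lemma cycle_won Z sigma (r : rel V) c : Inv (Z, sigma) ->
  (forall u w, r u w -> [/\ u \in Z, E u w & forall x, sigma u = Some x -> w = x]) ->
  c != [::] -> cycle r c -> odd (\max_(x <- c) pr x) = alpha.
Proof.
move=> HI Hr.
case: c => [//|x0 s] _ Hcy; set c := x0 :: s.
set n := size c; have n0 : 0 < n by [].
pose pl i := nth x0 c (i %% n).
have Hedge : forall i, r (pl i) (pl i.+1).
  move=> i; rewrite /pl.
  have -> : i.+1 %% n = (i %% n).+1 %% n by rewrite -addn1 -modnDml addn1.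
  exact: (cycle_nth x0 Hcy (ltn_pmod i n0)).
have Hw : won_by pr alpha pl.
  apply: (play_won HI).
    by move=> i; have [] := Hr _ _ (Hedge i).
  by move=> i w Hs; have [_ _ H] := Hr _ _ (Hedge i); exact: H.
case: Hw => v [Hv [Ho Hmax]].
suff -> : \max_(x <- c) pr x = pr v by [].
apply/eqP; rewrite eqn_leq; apply/andP; split.
  apply/bigmax_leqP_seq => x xc _; apply: Hmax => N.
  exists (N * n + index x c); split; first exact: leq_trans (leq_pmulr N n0) (leq_addr _ _).
  by rewrite /pl modnMDl modn_small ?index_mem // nth_index.
have [m [_ <-]] := Hv 0.
by apply: leq_bigmax_seq => //; rewrite /pl mem_nth // ltn_pmod.
Qed.

Lemma path_sub (e1 e2 : rel V) (B : {set V}) :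
  (forall x y, x \in B -> e1 x y -> y \in B /\ e2 x y) ->
  forall x p, x \in B -> path e1 x p -> path e2 x p && all [in B] p.
Proof.
move=> H x p; elim: p x => [//|y p IH] x xB /= /andP [exy Hp].
have [yB e2xy] := H _ _ xB exy.
by rewrite e2xy yB /=; apply: IH.
Qed.

Lemma extracted_tangle Z sigma t : Inv (Z, sigma) ->
  extracted own E S alpha Z sigma t -> is_tangle own E pr t.
Proof.
move=> HI [B [BC [B0 Bconn Bclos [u0 [w0 [u0B w0B Hu0w0]]]] ->]].
have HI' := HI; case: HI' => HA HZS Hsig _.
set C := ext_core own E S alpha Z sigma.
have Hcore : forall u, u \in C -> u \in Z /\
    (own u = alpha -> exists w, sigma u = Some w /\ w \in C).
  move=> u /bigcupP [X /andP [XZ Xcl] uX]; split; first exact: (subsetP XZ _ uX).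
  move=> ou; move/forallP: (Xcl) => /(_ u); rewrite uX /= ou eqxx.
  case E1: (sigma u) => [w|//] wX; exists w; split => //.
  by apply/bigcupP; exists X => //; rewrite XZ Xcl.
set h := hgraph own E S alpha Z sigma.
have Hh : forall u w, h u w -> [/\ u \in Z, E u w & forall x, sigma u = Some x -> w = x].
  move=> u w /and3P [uC wC]; have [uZ _] := Hcore u uC.
  case: eqP => [ou /eqP su | ou Euw].
    split => //; first by have [] := Hsig _ _ su.
    by move=> x; rewrite su => -[].
  by split => // x sx; exfalso; have [_ ou' _] := Hsig _ _ sx; exact: ou ou'.
set tt := Tangle B (fun u => odflt u (sigma u)).
have Htal : talpha pr tt = alpha.
  have : 0 < #|B| by rewrite card_gt0.
  move=> /(eq_bigmax_cond pr) [v vB Hv].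
  rewrite /talpha /= /maxpr Hv.
  have /connectP [p1 Hp1 Hl1] := Bconn v u0 vB u0B.
  have /connectP [p2 Hp2 Hl2] := Bconn w0 v w0B vB.
  have HBh : forall x y, x \in B -> h x y -> y \in B /\ h x y.
    by move=> x y xB hxy; split => //; exact: Bclos hxy.
  have /andP [_ Ha1] := path_sub HBh vB Hp1.
  have /andP [_ Ha2] := path_sub HBh w0B Hp2.
  set c := v :: (p1 ++ belast w0 p2).
  have Hcy : cycle h c.
    by rewrite /c /= rcons_cat {2}Hl2 -lastI cat_path Hp1 /= -Hl1 Hp2 andbT; exact: Hu0w0.
  have Hall : all [in B] c.
    rewrite /c /= vB all_cat Ha1 /=; apply/allP => x /mem_belast.
    by rewrite in_cons => /orP [/eqP -> //|]; move/allP: Ha2; apply.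
  have := cycle_won HI Hh (isT : c != [::]) Hcy.
  suff -> : \max_(x <- c) pr x = pr v by [].
  apply/eqP; rewrite eqn_leq; apply/andP; split.
    apply/bigmax_leqP_seq => x xc _; rewrite -Hv.
    by apply: leq_bigmax_cond; move/allP: Hall; apply.
  by apply: leq_bigmax_seq => //; rewrite /c mem_head.
have Hht : forall x y, x \in B -> h x y -> y \in B /\ tgraph own E pr tt x y.
  move=> x y xB hxy; have yB := Bclos _ _ xB hxy; split => //.
  rewrite /tgraph /= xB yB Htal /=.
  move: hxy => /and3P [_ _]; case: eqP => // _ /eqP -> //.
split => //.
- move=> u uB; rewrite Htal /= => ou.
  have uC := subsetP BC _ uB.
  have [_ /(_ ou) [w [su wC]]] := Hcore u uC.
  rewrite su /=; have [_ _ Euw] := Hsig _ _ su; split => //.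
  apply: (Bclos u) => //; rewrite /h /hgraph uC wC ou eqxx su eqxx //.
- move=> u w uB wB; have /connectP [p Hp ->] := Bconn u w uB wB.
  apply/connectP; exists p => //.
  by have /andP [] := path_sub Hht uB Hp.
- move=> c c0 Hcy; rewrite Htal; apply: (cycle_won HI _ c0 Hcy).
  move=> u w /and3P [uB wB]; rewrite Htal /=.
  have uC := subsetP BC _ uB; have [uZ Hu] := Hcore u uC.
  case: eqP => [ou /eqP Hw | ou Euw].
    have [x [sx _]] := Hu ou; rewrite sx /= in Hw; subst w.
    by have [_ _ Eux] := Hsig _ _ sx; split => // y; rewrite sx => -[->].
  split => // x sx; exfalso; have [_ ou' _] := Hsig _ _ sx; exact: ou ou'.
Qed.
End Core.

Lemma tattr_inv (V : finType) (own : V -> bool) (E : rel V) (pr : V -> nat)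
  (S : {set V}) (TT : tangle V -> Prop) (alpha : bool) (A Z : {set V}) (sigma : strat V) :
  (forall t, TT t -> is_tangle own E pr t /\ tv t \subset S) -> A \subset S ->
  clos_refl_trans _ (tattr_step own E pr S TT alpha A) (A, @empty_strat V) (Z, sigma) ->
  Inv own E pr S TT alpha A (Z, sigma).
Proof.
move=> HTT HAS H.
suff: forall st, clos_refl_trans_n1 _ (tattr_step own E pr S TT alpha A) (A, @empty_strat V) st ->
  Inv own E pr S TT alpha A st by apply; apply: clos_rt_rtn1.
move=> st H1; induction H1 as [|y z Hyz _ IH]; first exact: Inv_init.
exact: (Inv_step HTT Hyz IH).
Qed.

Lemma top_props (V : finType) (pr : V -> nat) (S : {set V}) :
  forall a, a \in top_region pr S ->
   odd (pr a) = odd (maxpr pr S) /\ forall w, w \in S -> pr w <= pr a.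
Proof.
move=> a; rewrite inE => /andP [aS /eqP ->]; split => // w wS.
exact: (leq_bigmax_cond (P := fun v => v \in S)).
Qed.

Lemma top_sub (V : finType) (pr : V -> nat) (S : {set V}) : top_region pr S \subset S.
Proof. by apply/subsetP => a; rewrite inE => /andP []. Qed.

Lemma reach_inv (V : finType) (own : V -> bool) (E : rel V) (pr : V -> nat)
  (T0 : tangle V -> Prop) (st : sstate V) :
  (forall t, T0 t -> is_tangle own E pr t) ->
  search_reachable own E pr T0 st ->
  (forall t, st.1.1 t -> is_tangle own E pr t) /\ (forall t, st.2 t -> is_tangle own E pr t).
Proof.
move=> HT0 H; apply clos_rt_rtn1 in H.
induction H as [|y z Hyz _ IH]; first by split.
case: Hyz IH => {y z}.
- move=> T D Y Z sigma _ Htat _ /= [IH1 IH2]; split => // t [/IH2 //|Hx].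
  have HTT : forall t, sub_tangles T (~: D) t -> is_tangle own E pr t /\ tv t \subset ~: D.
    by move=> t' [Tt tS]; split => //; apply: IH1.
  apply: (extracted_tangle HTT (@top_props V pr (~: D)) _ Hx).
  exact: (tattr_inv HTT (top_sub pr (~: D)) Htat.1).
- move=> T D Y _ /= [IH1 IH2]; split => // t [/IH1|/IH2] //.
Qed.

Theorem lemma2 (V : finType) (own : V -> bool) (E : rel V) (pr : V -> nat)
    (Htot : forall v, exists w, E v w)
    (T0 : tangle V -> Prop) (HT0 : forall t, T0 t -> is_tangle own E pr t)
    (T : tangle V -> Prop) (D : {set V}) (Y : tangle V -> Prop)
    (Hreach : search_reachable own E pr T0 (T, D, Y))
    (HS : ~: D != set0)
    (Z : {set V}) (sigma : V -> option V)
    (HZ : tattr own E pr (~: D) (sub_tangles T (~: D)) (odd (maxpr pr (~: D)))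
            (top_region pr (~: D)) Z sigma)
    (pl : nat -> V)
    (Hplay : forall i, pl i \in Z /\ E (pl i) (pl i.+1))
    (Hcons : consistent sigma pl) :
  won_by pr (odd (maxpr pr (~: D))) pl.
Proof.
have [IH1 _] := reach_inv HT0 Hreach.
have HTT : forall t, sub_tangles T (~: D) t -> is_tangle own E pr t /\ tv t \subset ~: D.
  by move=> t' [Tt tS]; split => //; apply: IH1.
apply: (play_won HTT (@top_props V pr (~: D)) _ Hplay Hcons).
exact: (tattr_inv HTT (top_sub pr (~: D)) HZ.1).
Qed.
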